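(* Let $d \geq 1$ and let $\mathbb{P}$ be a probability measure on $\Omega = \mathbb{R}^{\mathcal{E}^d}$ satisfying assumptions A1 and A2 below. For $x \in \mathbb{Z}^d$, let $C_x$ be the subgraph of the directed nearest neighbor graph $\mathcal{N}_D$ induced by the vertices $y$ such that $y \to x$ in $\mathcal{N}_D$. Then $\mathbb{P}$-almost surely, $C_x$ is finite for all $x \in \mathbb{Z}^d$.
   Context: $\mathcal{E}^d$ is the set of nearest-neighbor edges $\{x,y\}$ ($\|x-y\|_1=1$) of $\mathbb{Z}^d$. $\Omega=\mathbb{R}^{\mathcal{E}^d}$ carries the product Borel sigma-algebra; $\omega\in\Omega$ assigns a weight $\omega(e)$ to each edge. Assumption A1 (translation invariance): for every $z\in\mathbb{Z}^d$, $\mathbb{P}=\mathbb{P}\circ T_z^{-1}$, where $(T_z\omega)(e)=\omega(e+z)$ and $e+z=\{x+z,y+z\}$ for $e=\{x,y\}$. Assumption A2: for any distinct $e,f\in\mathcal{E}^d$, $\mathbb{P}(\omega(e)=\omega(f))=0$. The directed nearest neighbor graph $\mathcal{N}_D$ has vertex set $\mathbb{Z}^d$ and directed edges $\langle x,y\rangle$ for all $\{x,y\}\in\mathcal{E}^d$ with $\omega(\{x,y\})\le\omega(\{x,z\})$ for all $z$ with $\{x,z\}\in\mathcal{E}^d$ (each vertex points to the neighbor(s) minimizing the weight). For vertices $x,y$ of a directed graph, $x\to y$ means there is a directed path from $x$ to $y$; by convention $x\to x$. *)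

(* Defs.v *)
From HB Require Import structures.
From mathcomp Require Import all_boot all_order all_algebra.
From mathcomp Require Import all_classical all_reals all_analysis.
Set Implicit Arguments. Unset Strict Implicit. Unset Printing Implicit Defensive.
Import Order.TTheory GRing.Theory Num.Theory.
Local Open Scope ring_scope.
Local Open Scope classical_set_scope.

Definition Zd (d : nat) := 'rV[int]_d.

Definition unitv (d : nat) (i : 'I_d) : Zd d := delta_mx 0 i.

(* Nearest-neighbour edges of Z^d: the pair (x, i) encodes the edge
   {x, x + e_i}; this is a bijection onto E^d. *)
Definition Edge (d : nat) := (Zd d * 'I_d)%type.

Definition Config (R : realType) (d : nat) := Edge d -> R.
HB.instance Definition _ (R : realType) (d : nat) := gen_eqMixin (Config R d).
HB.instance Definition _ (R : realType) (d : nat) := gen_choiceMixin (Config R d).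
HB.instance Definition _ (R : realType) (d : nat) :=
  isPointed.Build (Config R d) (fun _ => 0).

(* Generators of the product Borel sigma-algebra: cylinder sets
   {omega | omega(e) in B}, B Borel. *)
Definition cyl_sets (R : realType) (d : nat) : set (set (Config R d)) :=
  [set A | exists (e : Edge d) (B : set R), measurable B /\
                                         A = (fun w => w e) @^-1` B].

Notation Omega R d := (g_sigma_algebraType (@cyl_sets R d)).

Definition transl (R : realType) (d : nat) (z : Zd d) (w : Config R d) : Config R d :=
  fun e => w (e.1 + z, e.2).

Definition nbr (d : nat) (x : Zd d) (i : 'I_d) (b : bool) : Zd d :=
  if b then x + unitv i else x - unitv i.

(* weight of the edge {x, nbr x i b} *)
Definition wt (R : realType) (d : nat) (w : Config R d) (x : Zd d) (i : 'I_d)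
    (b : bool) : R :=
  if b then w (x, i) else w (x - unitv i, i).

Definition ND_edge (R : realType) (d : nat) (w : Config R d) (x y : Zd d) : Prop :=
  exists (i : 'I_d) (b : bool), y = nbr x i b /\
    forall (j : 'I_d) (c : bool), wt w x i b <= wt w x j c.

Inductive reaches (R : realType) (d : nat) (w : Config R d) : Zd d -> Zd d -> Prop :=
  | reaches_refl x : reaches w x x
  | reaches_step x y z : ND_edge w x y -> reaches w y z -> reaches w x z.

Definition Cx (R : realType) (d : nat) (w : Config R d) (x : Zd d) : set (Zd d) :=
  [set y | reaches w y x].

(* Main.v *)
Require Import Defs.
From HB Require Import structures.
From mathcomp Require Import all_boot all_order all_algebra.
From mathcomp Require Import all_classical all_reals all_analysis.
From mathcomp Require Import zify ring lra.
From mathcomp Require Import measurable_realfun.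
Import Order.TTheory GRing.Theory Num.Theory.
Local Open Scope ring_scope.
Local Open Scope classical_set_scope.
Set Implicit Arguments. Unset Strict Implicit. Unset Printing Implicit Defensive.

Module S1.
Section Det.
Variables (R : realType) (d : nat) (i0 : 'I_d).
Local Notation Z := (Zd d).
Local Notation W := (Config R d).
Implicit Types (w : W) (x y z : Z) (q : R).

Definition amin w x : 'I_d * bool :=
  [arg min_(p < (i0, true)) wt w x p.1 p.2]%O.
Definition mw w x := wt w x (amin w x).1 (amin w x).2.
Definition fx w x := nbr x (amin w x).1 (amin w x).2.

Lemma mw_le w x i b : mw w x <= wt w x i b.
Proof.
rewrite /mw /amin; case: arg_minP => //= p _ H.
exact: (H (i, b)).
Qed.

Definition goodv w x := forall i b j c, wt w x i b = wt w x j c -> i = j /\ b = c.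

Lemma ND_fx w x : ND_edge w x (fx w x).
Proof. exists (amin w x).1, (amin w x).2; split => // j c; exact: mw_le. Qed.

Lemma ND_wt w x y : ND_edge w x y -> exists i b, y = nbr x i b /\ wt w x i b = mw w x.
Proof.
move=> [i [b [-> H]]]; exists i, b; split => //.
apply/eqP; rewrite eq_le mw_le andbT; exact: H.
Qed.

Lemma ND_func w x y : goodv w x -> ND_edge w x y -> y = fx w x.
Proof.
move=> g /ND_wt [i [b [-> e]]].
have [-> ->] := g _ _ _ _ e; by [].
Qed.

Lemma unitv_neq0 (i : 'I_d) : unitv i != 0.
Proof.
apply/eqP => /matrixP /(_ 0 i); rewrite /unitv !mxE !eqxx /=.
by move/eqP; rewrite oner_eq0.
Qed.

Lemma nbr_back x i b : nbr (nbr x i b) i (~~ b) = x.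
Proof. by case: b; rewrite /nbr /= ?addrK ?subrK. Qed.

Lemma wt_back w x i b : wt w (nbr x i b) i (~~ b) = wt w x i b.
Proof. by case: b; rewrite /wt /nbr /= ?addrK. Qed.

Lemma ND_mono w x y : ND_edge w x y -> mw w y <= mw w x.
Proof.
move=> /ND_wt [i [b [-> e]]]; rewrite -e -(wt_back w x i b); exact: mw_le.
Qed.

Lemma reaches_mono w y x : reaches w y x -> mw w x <= mw w y.
Proof.
elim => [//|a b c ab _ IH]; apply: le_trans IH _; exact: ND_mono.
Qed.

Inductive rq w q : Z -> Z -> Prop :=
 | rq_refl y : rq w q y y
 | rq_step z z' y : ND_edge w z z' -> q <= mw w z -> rq w q z' y -> rq w q z y.

Lemma split_reach w q z x : reaches w z x -> mw w x < q ->
  exists y, [/\ mw w y < q, rq w q z y & reaches w y x].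
Proof.
elim => [a ? | a b c ab bc IH lt].
  by exists a; split => //; [exact: rq_refl | exact: reaches_refl].
have [y [y1 y2 y3]] := IH lt.
case: (ltP (mw w a) q) => ha.
  exists a; split => //; first exact: rq_refl.
  exact: reaches_step ab bc.
by exists y; split => //; exact: rq_step ab ha y2.
Qed.

Lemma rq_disj w q z y1 y2 : (forall x, goodv w x) ->
  rq w q z y1 -> rq w q z y2 -> mw w y1 < q -> mw w y2 < q -> y1 = y2.
Proof.
move=> g h1; elim: h1 y2 => [a | a a' b aa' qa _ IH] y2 h2 l1 l2.
  case: h2 l1 {l2} => [//| a0 a1 b0 _ qa _]; by rewrite ltNge qa.
case: h2 aa' qa IH l2 => [a0 _ qa _| a0 a1 b0 e0 _ r1 e1 _ IH l2].
  by rewrite ltNge qa.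
apply: IH => //.
by rewrite (ND_func (g _) e1) -(ND_func (g _) e0).
Qed.

Lemma near_x w x q y : goodv w x -> goodv w (fx w x) ->
  mw w x < q ->
  (forall i b, mw w x < wt w x i b -> q <= wt w x i b) ->
  (forall i b, mw w x < wt w (fx w x) i b -> q <= wt w (fx w x) i b) ->
  reaches w y x -> mw w y < q -> y = x \/ y = fx w x.
Proof.
move=> gx gf lq Hx Hf r ly0.
suff H : forall a c, reaches w a c -> c = x -> mw w a < q -> a = x \/ a = fx w x.
  exact: H r erefl ly0.
move=> a0 c0; elim => [a1|a b c ab bc IH] E ly; first by left.
subst c.
have [i [j [bE e]]] := ND_wt ab.
have lb : mw w b < q by exact: le_lt_trans (ND_mono ab) ly.
have aE : a = nbr b i (~~ j) by rewrite bE nbr_back.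
have wE : wt w b i (~~ j) = mw w a by rewrite bE wt_back e.
case: (IH erefl lb) => bc'.
- rewrite {}bc' in aE wE bc lb; right.
  have : wt w x i (~~ j) = mw w x.
    apply/eqP; rewrite eq_le mw_le andbT; rewrite leNgt; apply/negP => /Hx.
    by rewrite wE leNgt ly.
  rewrite /mw => /gx [e1 e2]; by rewrite aE /fx e1 e2.
- rewrite {}bc' in aE wE bc lb; left.
  have mfx : mw w (fx w x) = mw w x.
    apply/eqP; rewrite eq_le (ND_mono (ND_fx w x)) /=.
    exact: reaches_mono bc.
  have h1 : wt w (fx w x) i (~~ j) = mw w (fx w x).
    apply/eqP; rewrite eq_le mw_le andbT; rewrite leNgt; apply/negP.
    rewrite mfx => /Hf; by rewrite wE leNgt ly.
  have h2 : wt w (fx w x) (amin w x).1 (~~ (amin w x).2) = mw w (fx w x).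
    by rewrite /fx wt_back mfx.
  have := gf _ _ _ _ (etrans h1 (esym h2)); move=> [e1 e2].
  rewrite aE e1 e2 /fx nbr_back //.
Qed.

Definition gap w x v : R :=
  (\big[Order.min/ mw w x + 1]_(p : 'I_d * bool | mw w x < wt w v p.1 p.2)
     wt w v p.1 p.2)%O.

Lemma gap_gt w x v : mw w x < gap w x v.
Proof. rewrite /gap; apply: lt_bigmin => //; by rewrite ltrDl. Qed.

Lemma gap_le w x v i b : mw w x < wt w v i b -> gap w x v <= wt w v i b.
Proof. move=> h; exact: (@bigmin_le_cond _ _ _ _ (i, b)). Qed.

Lemma choose_q w x : exists r : rat, [/\ mw w x < ratr r,
  (forall i b, mw w x < wt w x i b -> ratr r <= wt w x i b) &
  (forall i b, mw w x < wt w (fx w x) i b -> ratr r <= wt w (fx w x) i b)].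
Proof.
have h : mw w x < Order.min (gap w x x) (gap w x (fx w x)).
  by rewrite lt_min !gap_gt.
have [r] := rat_in_itvoo h; rewrite in_itv /= => /andP [h1 h2].
exists r; split => // i b hb; apply/ltW/(lt_le_trans h2).
  by rewrite ge_min gap_le.
by rewrite ge_min gap_le ?orbT.
Qed.

Lemma D1 w x : (forall v, goodv w v) -> ~ finite_set (Cx w x) ->
  exists r : rat, exists y, mw w y < ratr r /\
    ~ finite_set [set z | rq w (ratr r) z y].
Proof.
move=> g nf; have [r [h1 h2 h3]] := choose_q w x.
have sub : Cx w x `<=` [set x; fx w x] `|` [set z | rq w (ratr r) z x]
             `|` [set z | rq w (ratr r) z (fx w x)].
  move=> z /= hz; have [y [y1 y2 y3]] := split_reach hz h1.
  case: (near_x (g x) (g _) h1 h2 h3 y3 y1) => ye; subst y; by [left; right | right].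
have mf : mw w (fx w x) < ratr r := le_lt_trans (ND_mono (ND_fx w x)) h1.
case: (pselect (finite_set [set z | rq w (ratr r) z x])) => f1.
  case: (pselect (finite_set [set z | rq w (ratr r) z (fx w x)])) => f2.
    exfalso; apply: nf; apply: sub_finite_set sub _.
    by rewrite !finite_setU; split => //; split => //; exact: finite_set2.
  by exists r, (fx w x).
by exists r, x.
Qed.
End Det.

End S1.
Import S1.

Module S2.
Section Trans.
Variables (R : realType) (d : nat) (i0 : 'I_d).
Local Notation Z := (Zd d).
Local Notation W := (Config R d).
Implicit Types (w : W) (x y z : Z) (q : R).
Local Notation mw := (mw i0).
Local Notation fx := (fx i0).
Local Notation rq := (rq i0).

Lemma wt_transl y w x i b : wt (transl y w) x i b = wt w (x + y) i b.
Proof. by case: b; rewrite /wt /transl //= addrAC. Qed.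

Lemma nbr_add x y i b : nbr x i b + y = nbr (x + y) i b.
Proof. by case: b; rewrite /nbr addrAC. Qed.

Lemma amin_transl y w x : amin i0 (transl y w) x = amin i0 w (x + y).
Proof.
rewrite /amin; congr Order.arg_min; apply/funext => p; exact: wt_transl.
Qed.

Lemma mw_transl y w x : mw (transl y w) x = mw w (x + y).
Proof. by rewrite /S1.mw amin_transl wt_transl. Qed.

Lemma ND_transl y w a b : ND_edge (transl y w) a b -> ND_edge w (a + y) (b + y).
Proof.
move=> [i [c [-> H]]]; exists i, c; split; first exact: nbr_add.
move=> j e; rewrite -!wt_transl; exact: H.
Qed.

Lemma rq_transl y w q a b : rq (transl y w) q a b -> rq w q (a + y) (b + y).
Proof.
elim => [v|u u' v e h _ IH]; first exact: rq_refl.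
apply: rq_step (ND_transl e) _ IH; by rewrite -mw_transl.
Qed.

Lemma transl_inv y w : transl (- y) (transl y w) = w.
Proof. apply/funext => -[a i]; by rewrite /transl /= subrK. Qed.

Lemma rq_transl' y w q a b : rq w q a b -> rq (transl y w) q (a - y) (b - y).
Proof.
move=> h; apply: (@rq_transl (- y)); by rewrite transl_inv.
Qed.

Fixpoint rqn (n : nat) w q z y : Prop :=
  match n with
  | 0 => z = y
  | n.+1 => z = y \/ exists z', [/\ ND_edge w z z', q <= mw w z & rqn n w q z' y]
  end.

Lemma rqP w q z y : rq w q z y <-> exists n, rqn n w q z y.
Proof.
split.
  elim => [v|u u' v e h _ [n IH]]; first by exists 0%N.
  by exists n.+1; right; exists u'.
move=> [n]; elim: n z => [z /= ->|n IH z /= [->|[z' [e h r]]]]; try exact: rq_refl.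
exact: rq_step e h (IH _ r).
Qed.

Definition inbox (N : nat) (z : Z) : bool := [forall i, (absz (z ord0 i) <= N)%N].

Definition Kt (N : nat) := {ffun 'I_d -> 'I_(N.*2.+1)}.
Definition emb N (k : Kt N) : Z := \row_i ((k i)%:Z - N%:Z).

Lemma emb_inj N : injective (@emb N).
Proof.
move=> k1 k2 /matrixP h; apply/ffunP => i; have := h 0 i; rewrite !mxE.
move/addIr => /eqP; rewrite eqz_nat => /eqP e; exact: val_inj.
Qed.

Lemma emb_surj N z : inbox N z -> exists k : Kt N, emb k = z.
Proof.
move=> /forallP hb.
have hk i : (absz (z ord0 i + N%:Z)%R < N.*2.+1)%N.
  have := hb i; lia.
exists [ffun i => Ordinal (hk i)]; apply/matrixP => a i.
rewrite !mxE ffunE /= (ord1 a).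
have -> : ((absz (z ord0 i + N%:Z)%R)%:Z = z ord0 i + N%:Z).
  have := hb i; lia.
by rewrite addrK.
Qed.

Lemma emb_box N (k : Kt N) : inbox N (emb k).
Proof. apply/forallP => i; rewrite mxE; have := ltn_ord (k i); lia. Qed.

Lemma box_finite N : finite_set [set z | inbox N z].
Proof.
apply: (@sub_finite_set _ _ ((@emb N) @` setT)); last first.
  exact: finite_image finite_finset.
by move=> z /= /emb_surj [k <-]; exists k.
Qed.

Lemma nbr_box n x i b : inbox n (nbr x i b) -> inbox n.+1 x.
Proof.
move=> /forallP h; apply/forallP => j; move: (h j); clear h.
rewrite /nbr /unitv; case: b; rewrite !mxE /=; case: (i == j) => /=; lia.
Qed.

Lemma ND_box w n a b : ND_edge w a b -> inbox n b -> inbox n.+1 a.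
Proof. move=> [i [c [-> _]]]; exact: nbr_box. Qed.

Lemma crossing w q n z y : rq w q z y -> inbox n y -> ~~ inbox n z ->
  exists s, [/\ rq w q s y, ~~ inbox n s & inbox n.+1 s].
Proof.
elim => [v hy hu|u u' v e h r IH hy hu]; first by rewrite hy in hu.
case hu': (inbox n u'); last by apply: IH => //; rewrite hu'.
exists u; split => //; first exact: rq_step e h r.
exact: ND_box e hu'.
Qed.

Definition B0 q : set W :=
  [set w | mw w 0 < q /\ forall N, exists z, ~~ inbox N z /\ exists n, rqn n w q z 0].

Lemma toB w q y : mw w y < q -> ~ finite_set [set z | rq w q z y] ->
  B0 q (transl y w).
Proof.
move=> h nf; split; first by rewrite mw_transl add0r.
move=> N; apply: contrapT => hN; apply: nf.
apply: (@sub_finite_set _ _ ((fun z => z + y) @` ([set z | inbox N z]))); last first.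
  exact: finite_image (box_finite N).
move=> z /= hz; exists (z - y); last by rewrite subrK.
apply: contrapT => hb; apply: hN; exists (z - y); split; first exact/negP.
apply/rqP; have := rq_transl' y hz; by rewrite subrr.
Qed.

Lemma fromB w q y : B0 q (transl y w) ->
  mw w y < q /\ forall n, exists z, ~~ inbox n z /\ rq w q z y.
Proof.
move=> [h1 h2]; split; first by rewrite mw_transl add0r in h1.
move=> n; have [z [hz [m hm]]] := h2 (n + \max_i absz (y ord0 i))%N.
exists (z + y); split; last first.
  by have := rq_transl (proj2 (rqP _ _ _ _) (ex_intro _ m hm)); rewrite add0r.
move: hz; apply: contra => /forallP hb; apply/forallP => i.
have := hb i; rewrite mxE.
have := @leq_bigmax _ (fun i => absz (y ord0 i)) i.
move=> h3 h4; apply: (@leq_trans (absz (z ord0 i + y ord0 i)%R + absz (y ord0 i))); [lia | exact: leq_add].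
Qed.
End Trans.

End S2.
Import S2.

Module S3.
Section Count.
Variables (R : realType) (d : nat) (i0 : 'I_d).
Local Notation Z := (Zd d).
Local Notation W := (Config R d).
Implicit Types (w : W) (x y z : Z) (q : R).
Local Notation mw := (mw i0).
Local Notation rq := (rq i0).
Local Notation B0 := (B0 i0).

Lemma count_bound w q n : (forall v, goodv w v) ->
  (#|[pred k : Kt d n.+1 | inbox n (emb k) && `[< B0 q (transl (emb k) w) >]]|
    <= #|[pred k : Kt d n.+1 | ~~ inbox n (emb k)]|)%N.
Proof.
move=> g.
pose A := [pred k : Kt d n.+1 | inbox n (emb k) && `[< B0 q (transl (emb k) w) >]].
pose phi k := odflt k [pick s : Kt d n.+1 | ~~ inbox n (emb s) && `[< rq w q (emb s) (emb k) >]].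
have phiP k : k \in A -> ~~ inbox n (emb (phi k)) /\ rq w q (emb (phi k)) (emb k).
  rewrite inE => /andP [hb /asboolP hB].
  have [_ h2] := fromB hB.
  have [z [hz hr]] := h2 n.
  have [s [s1 s2 s3]] := crossing hr hb hz.
  have [k' ek'] := emb_surj s3.
  rewrite /phi; case: pickP => [s0 /andP [h1 /asboolP h3] // | /(_ k')].
  rewrite ek' s2 /=; case: asboolP => // nr _; exfalso; exact: nr s1.
have hm k : k \in A -> mw w (emb k) < q.
  by rewrite inE => /andP [_ /asboolP /fromB []].
have inj : {in A &, injective phi}.
  move=> k1 k2 h1 h2 e.
  have [_ r1] := phiP _ h1; have [_ r2] := phiP _ h2.
  rewrite e in r1.
  apply: emb_inj; exact: rq_disj g r1 r2 (hm _ h1) (hm _ h2).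
rewrite -(card_in_imset inj).
apply: subset_leq_card; apply/fintype.subsetP => s /imsetP [k hk ->].
by rewrite inE (proj1 (phiP _ hk)).
Qed.
End Count.

Lemma ineq_pow (R : realFieldType) (a : R) (m : nat) : 1 <= a ->
  (a + 2) ^+ m.+1 - a ^+ m.+1 <= 2 * (m.+1)%:R * (a + 2) ^+ m.
Proof.
move=> a1; elim: m => [|m IH].
  rewrite !expr1 expr0; lra.
have h1 : a ^+ m.+1 <= (a + 2) ^+ m.+1.
  apply: lerXn2r; rewrite ?nnegrE; lra.
have h2 : 0 <= (a + 2) by lra.
rewrite [(a+2) ^+ m.+2]exprS [a ^+ m.+2]exprS.
have e : (a + 2) * (a + 2) ^+ m.+1 - a * a ^+ m.+1 =
   (a + 2) * ((a + 2) ^+ m.+1 - a ^+ m.+1) + 2 * a ^+ m.+1 by ring.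
rewrite e.
have h3 : (a + 2) * ((a + 2) ^+ m.+1 - a ^+ m.+1) <= (a+2) * (2 * (m.+1)%:R * (a + 2) ^+ m).
  by apply: ler_wpM2l.
rewrite [(a+2) ^+ m.+1]exprS in h1 h3 *.
rewrite -natr1 in h3 *.
have h4 : 0 <= (a + 2) ^+ m by rewrite exprn_ge0.
nra.
Qed.

Lemma pr_zero (R : realType) (d : nat) (hd : (0 < d)%N) (pr : R) : 0 <= pr ->
  (forall n : nat, pr * (n.*2.+1)%:R ^+ d <= (n.*2.+3)%:R ^+ d - (n.*2.+1)%:R ^+ d) ->
  pr = 0.
Proof.
case: d hd => // m _ p0 H.
pose C : R := 2 * (m.+1)%:R * 3 ^+ m.
have HC n : pr * (n.*2.+1)%:R <= C.
  set a : R := (n.*2.+1)%:R.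
  have a1 : 1 <= a by rewrite /a ler1n.
  have e3 : (n.*2.+3)%:R = a + 2 :> R by rewrite /a -natrD addn2.
  have := H n; rewrite e3 => h.
  have h2 := ineq_pow m a1.
  have h3 : (a + 2) ^+ m <= (3 * a) ^+ m.
    apply: lerXn2r; rewrite ?nnegrE; lra.
  have h4 : 0 < a ^+ m by apply: exprn_gt0; lra.
  have h5 : pr * a * a ^+ m <= C * a ^+ m.
    rewrite -mulrA -exprS.
    apply: le_trans h _; apply: le_trans h2 _.
    rewrite /C -[X in _ <= X]mulrA -exprMn; apply: ler_wpM2l => //.
  by rewrite -(ler_pM2r h4).
apply/eqP; rewrite eq_le p0 andbT; rewrite leNgt; apply/negP => pp.
have c0 : 0 <= C / pr by rewrite /C; apply: divr_ge0 => //; exact: ltW.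
have hb := archi_boundP c0.
set n := Num.Def.archi_bound (C / pr) in hb.
have h1 := HC n.
have h2 : n%:R <= (n.*2.+1)%:R :> R by rewrite ler_nat -addnn; lia.
rewrite ltr_pdivrMr // in hb.
have h3 : n%:R * pr <= pr * (n.*2.+1)%:R by rewrite mulrC; apply: ler_wpM2l => //; exact: ltW.
have := lt_le_trans hb (le_trans h3 h1); by rewrite ltxx.
Qed.

End S3.
Import S3.

Module S4.
Section Meas.
Variables (R : realType) (d : nat) (i0 : 'I_d).
Local Notation Om := (Omega R d).
Local Notation Z := (Zd d).
Local Notation W := (Config R d).

Lemma mcoord (e : Edge d) : measurable_fun setT (fun w : Om => w e).
Proof. move=> _ B mB; rewrite setTI; apply: sub_sigma_algebra; by exists e, B. Qed.

Lemma mle (f g : Om -> R) : measurable_fun setT f -> measurable_fun setT g ->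
  measurable [set w : Om | f w <= g w].
Proof. by move=> mf mg; have := measurable_fun_le measurableT mf mg; rewrite setTI. Qed.

Lemma mlt (f g : Om -> R) : measurable_fun setT f -> measurable_fun setT g ->
  measurable [set w : Om | f w < g w].
Proof.
move=> mf mg; have -> : [set w : Om | f w < g w] = ~` [set w | g w <= f w].
  by apply/seteqP; split => w /=; rewrite ltNge => /negP.
by apply: measurableC; exact: mle.
Qed.

Lemma meq (f g : Om -> R) : measurable_fun setT f -> measurable_fun setT g ->
  measurable [set w : Om | f w = g w].
Proof.
move=> mf mg; have -> : [set w : Om | f w = g w] =
  [set w | f w <= g w] `&` [set w | g w <= f w].
  apply/seteqP; split => w /=; first by move=> ->; rewrite lexx.
  by move=> [h1 h2]; apply/le_anti; rewrite h1 h2.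
by apply: measurableI; apply: mle.
Qed.

Lemma mex (I : countType) (F : I -> set Om) : (forall i, measurable (F i)) ->
  measurable [set w | exists i, F i w].
Proof.
move=> mF.
have -> : [set w | exists i, F i w] =
    \bigcup_n (if @unpickle I n is Some i then F i else set0).
  apply/seteqP; split => [w [i Fi]|w [n _]].
    by exists (pickle i) => //; rewrite pickleK.
  by case: unpickle => // i Fi; exists i.
by apply: bigcupT_measurable => n; case: unpickle.
Qed.

Lemma mall (I : countType) (F : I -> set Om) : (forall i, measurable (F i)) ->
  measurable [set w | forall i, F i w].
Proof.
move=> mF; have -> : [set w | forall i, F i w] = ~` [set w | exists i, ~ F i w].
  apply/seteqP; split => w /=; first by move=> H [i]; apply; exact: H.
  by move=> H i; apply: contrapT => nF; apply: H; exists i.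
by apply: measurableC; apply: mex => i; exact: measurableC.
Qed.

Lemma mP (Pr : Prop) (S : set Om) : measurable S -> measurable [set w | Pr /\ S w].
Proof.
case: (pselect Pr) => p mS.
  by have -> : [set w | Pr /\ S w] = S by apply/seteqP; split => w /= => [[]|].
have -> : [set w | Pr /\ S w] = set0.
  by apply/seteqP; split => w //= [/p].
exact: measurable0.
Qed.

Lemma mPor (Pr : Prop) (S : set Om) : measurable S -> measurable [set w | Pr \/ S w].
Proof.
case: (pselect Pr) => p mS.
  by have -> : [set w | Pr \/ S w] = setT by apply/seteqP; split => w //= _; left.
have -> : [set w | Pr \/ S w] = S.
  apply/seteqP; split => w /=; last by right.
  by case => // /p.
exact: mS.
Qed.

Lemma mand (S1 S2 : set Om) : measurable S1 -> measurable S2 ->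
  measurable [set w | S1 w /\ S2 w].
Proof. exact: measurableI. Qed.

Variable h : Om -> W.
Hypothesis mh : forall e, measurable_fun setT (fun w => h w e).

Lemma mwt x i b : measurable_fun setT (fun w => wt (h w) x i b).
Proof. by case: b; exact: mh. Qed.

Lemma m_mwlt x q : measurable [set w | mw i0 (h w) x < q].
Proof.
have -> : [set w | mw i0 (h w) x < q] =
    [set w | exists p : 'I_d * bool, wt (h w) x p.1 p.2 < q].
  apply/seteqP; split => w /=; first by move=> H; exists (amin i0 (h w) x).
  by move=> [p hp]; exact: le_lt_trans (mw_le _ _ _ _ _) hp.
by apply: mex => p; apply: mlt; [exact: mwt | exact: measurable_cst].
Qed.

Lemma m_mwge x q : measurable [set w | q <= mw i0 (h w) x].
Proof.
have -> : [set w | q <= mw i0 (h w) x] =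
    [set w | forall p : 'I_d * bool, q <= wt (h w) x p.1 p.2].
  apply/seteqP; split => w /=; last by move=> H; exact: H.
  by move=> H p; exact: le_trans H (mw_le _ _ _ _ _).
by apply: mall => p; apply: mle; [exact: measurable_cst | exact: mwt].
Qed.

Lemma mND a b : measurable [set w | ND_edge (h w) a b].
Proof.
apply: (@mex _ (fun i => [set w | exists c : bool, b = nbr a i c /\
  forall j c', wt (h w) a i c <= wt (h w) a j c'])) => i.
apply: (@mex _ (fun c => [set w | b = nbr a i c /\
  forall j c', wt (h w) a i c <= wt (h w) a j c'])) => c.
apply: mP; apply: (@mall _ (fun j => [set w | forall c', wt (h w) a i c <= wt (h w) a j c'])) => j.
by apply: mall => c'; apply: mle; exact: mwt.
Qed.

Lemma mrqn q n z y : measurable [set w | rqn i0 n (h w) q z y].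
Proof.
elim: n z => [z|n IH z] /=.
  by have := @mP (z = y) setT measurableT; rewrite /=; congr measurable; apply/seteqP; split => w /= => [[]|].
apply: mPor.
apply: (@mex _ (fun z' => [set w | [/\ ND_edge (h w) z z', q <= mw i0 (h w) z & rqn i0 n (h w) q z' y]])) => z'.
have -> : [set w | [/\ ND_edge (h w) z z', q <= mw i0 (h w) z & rqn i0 n (h w) q z' y]] =
  [set w | ND_edge (h w) z z'] `&` ([set w | q <= mw i0 (h w) z] `&` [set w | rqn i0 n (h w) q z' y]).
  by apply/seteqP; split => w /= => [[]|[? []]].
apply: measurableI; first exact: mND.
apply: measurableI; first exact: m_mwge.
exact: IH.
Qed.

Lemma mB0 q : measurable [set w | B0 i0 q (h w)].
Proof.
apply: mand; first exact: m_mwlt.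
apply: mall => N; apply: mex => z; apply: mP; apply: mex => n; exact: mrqn.
Qed.
End Meas.

End S4.
Import S4.

Module S5.
Section Prob.
Variables (R : realType) (d : nat).
Local Notation Om := (Omega R d).
Local Notation Z := (Zd d).
Local Notation W := (Config R d).
Variable P : probability Om R.

Definition edge (x : Z) (i : 'I_d) (b : bool) : Edge d :=
  if b then (x, i) else (x - unitv i, i).

Lemma wt_edge (w : W) x i b : wt w x i b = w (edge x i b).
Proof. by case: b. Qed.

Lemma edge_inj x i b j c : edge x i b = edge x j c -> i = j /\ b = c.
Proof.
have H k : x - unitv k <> x.
  move=> /eqP; rewrite -subr_eq0 addrAC subrr add0r oppr_eq0 => /eqP e.
  by have := unitv_neq0 k; rewrite e eqxx.
case: b; case: c => /= e; try (by case: e => ->); try (by case: e => _ ->); exfalso; case: e => e1 _.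
  exact: H _ (esym e1).
exact: H _ e1.
Qed.

Definition Gd : set Om := [set w | forall (x : Z) (p p' : 'I_d * bool),
  p = p' \/ wt w x p.1 p.2 <> wt w x p'.1 p'.2].

Lemma Gd_good w : Gd w -> forall v, goodv w v.
Proof.
move=> g v i b j c e; case: (g v (i, b) (j, c)) => [[-> ->]//|/=]; by [].
Qed.

Lemma mGd : measurable Gd.
Proof.
apply: mall => x; apply: mall => p; apply: mall => p'; apply: mPor.
by apply: measurableC; apply: meq; apply: (mwt (h := id)) => e; exact: mcoord.
Qed.

Lemma negl_ex (I : countType) (F : I -> set Om) :
  (forall i, P.-negligible (F i)) -> P.-negligible [set w | exists i, F i w].
Proof.
move=> nF; apply: (@negligibleS _ _ _ _ (\bigcup_n (if @unpickle I n is Some i then F i else set0))).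
  by move=> w [i Fi]; exists (pickle i) => //; rewrite pickleK.
apply: negligible_bigcup => n; case: unpickle => [?|]; [exact: nF | exact: negligible_set0].
Qed.

Hypothesis A2 : forall e f : Edge d, e <> f ->
      P [set w : Om | w e = w f] = 0%E.

Lemma negl_Gd : P.-negligible (~` Gd).
Proof.
apply: (@negligibleS _ _ _ _ [set w : Om | exists t : Z * ('I_d * bool) * ('I_d * bool),
   t.1.2 <> t.2 /\ w (edge t.1.1 t.1.2.1 t.1.2.2) = w (edge t.1.1 t.2.1 t.2.2)]).
  move=> w /= ng; apply: contrapT => H; apply: ng => x p p'.
  case: (pselect (p = p')) => pp; [by left | right] => e; apply: H.
  by exists (x, p, p'); rewrite -!wt_edge.
apply: negl_ex => -[[x p] p'] /=.
case: (pselect (p = p')) => pp.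
  apply: (@negligibleS _ _ _ _ set0); first by move=> w [].
  exact: negligible_set0.
exists [set w : Om | w (edge x p.1 p.2) = w (edge x p'.1 p'.2)]; split.
- by apply: meq; exact: mcoord.
- apply: A2 => /edge_inj [e1 e2]; apply: pp.
  by move: p p' e1 e2 => [? ?] [? ?] /= -> ->.
- by move=> w /= [].
Qed.

Local Open Scope ereal_scope.
Lemma sum_le_card (I : finType) (A : pred I) (E : I -> set Om) (K : nat) :
  (forall k, measurable (E k)) ->
  (forall w, (#|[pred k | (k \in A) && (w \in E k)]| <= K)%N) ->
  (\sum_(k in A) P (E k) <= (K%:R : R)%:E)%E.
Proof.
move=> mE hK.
have mi k : measurable_fun setT (EFin \o (\1_(E k) : Om -> R)).
  apply/measurable_EFinP; exact: measurable_indic.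
rewrite (eq_bigr (fun k => \int[P]_(w in setT) (\1_(E k) w)%:E)); last first.
  by move=> k _; rewrite integral_indic // setIT.
have f0 : forall k w, setT w -> 0 <= (\1_(E k) w)%:E :> \bar R.
  by move=> k w _; rewrite lee_fin.
rewrite -big_enum /= -(@ge0_integral_sum _ _ _ P setT measurableT _ (fun k w => (\1_(E k) w)%:E) mi f0).
apply: le_trans (_ : \int[P]_(w in setT) (cst (K%:R : R)%:E w) <= _)%E.
  apply: ge0_le_integral => //.
  - by move=> w _; apply: sume_ge0 => k _; rewrite lee_fin.
  - by apply: emeasurable_sum => k; exact: mi.
  move=> w _; rewrite big_enum sumEFin lee_fin /=.
  under eq_bigr do rewrite indicE.
  rewrite -natr_sum ler_nat; apply: leq_trans (hK w).
  rewrite -sum1_card big_mkcond /= [X in (_ <= X)%N]big_mkcond /=.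
  apply: leq_sum => k _; rewrite !inE; case: (k \in A) => //=.
rewrite integral_cst // -[X in _ <= X]mule1; apply: lee_wpmul2l; first by rewrite lee_fin.
exact: probability_le1.
Qed.
End Prob.

End S5.
Import S5.

Module S6.
Arguments Gd {R d}.
Arguments mGd {R d}.
Arguments negl_Gd {R d P}.
Section Final.
Variables (R : realType) (d : nat) (i0 : 'I_d).
Local Notation Om := (Omega R d).
Local Notation Z := (Zd d).
Local Notation W := (Config R d).

Definition shift n (k : Kt d n) : Kt d n.+1 :=
  [ffun i => @Ordinal ((n.+1).*2.+1) (k i).+1
     (let h := ltn_ord (k i) in ltac:(rewrite doubleS; lia))].

Lemma emb_shift n (k : Kt d n) : emb (shift k) = emb k.
Proof. apply/matrixP => a i; rewrite !mxE ffunE /=; lia. Qed.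

Lemma card_In n : ((n.*2.+1) ^ d <= #|[pred k : Kt d n.+1 | inbox n (emb k)]|)%N.
Proof.
have inj : injective (@shift n).
  by move=> k1 k2 e; apply: emb_inj; rewrite -emb_shift e emb_shift.
have := card_imset (mem (@predT (Kt d n))) inj.
rewrite cardT -cardE card_ffun !card_ord => <-.
apply: subset_leq_card; apply/fintype.subsetP => s /imsetP [k _ ->].
by rewrite inE emb_shift emb_box.
Qed.

Lemma card_tot n : (#|[pred k : Kt d n.+1 | inbox n (emb k)]| +
   #|[pred k : Kt d n.+1 | ~~ inbox n (emb k)]| = (n.*2.+3) ^ d)%N.
Proof.
rewrite (cardC [pred k : Kt d n.+1 | inbox n (emb k)]) card_ffun !card_ord.
by rewrite doubleS.
Qed.

Variable P : probability Om R.
Hypothesis A1 : forall (z : Zd d) (A : set Om),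
      measurable A -> P ((@transl R d z) @^-1` A) = P A.
Hypothesis A2 : forall e f : Edge d, e <> f ->
      P [set w : Om | w e = w f] = 0%E.

Lemma mBT (y : Z) q : measurable ((transl y @^-1` B0 i0 q) : set Om).
Proof.
apply: (@mB0 R d i0 (transl y)) => e.
exact: (mcoord (e.1 + y, e.2)).
Qed.

Lemma mB00 q : measurable (B0 i0 q : set Om).
Proof.
apply: (@mB0 R d i0 id) => e; exact: mcoord.
Qed.

Lemma B_null (q : R) (y : Z) : P (transl y @^-1` B0 i0 q `&` Gd) = 0%E.
Proof.
have nG := negl_Gd A2.
have PG : P (~` Gd) = 0%E by apply: measure_negligible => //; apply: measurableC; exact: mGd.
set pB := P (B0 i0 q : set Om).
have hE y' : P (transl y' @^-1` B0 i0 q `&` Gd) = pB.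
  rewrite /pB -(A1 y' (mB00 q)).
  rewrite [in RHS](measureDI _ (mBT y' q) (mGd)).
  rewrite [X in (X + _)%E](_ : _ = 0%E) ?add0e //.
    apply/eqP; rewrite -measure_le0 -PG; apply: le_measure; rewrite ?inE.
    - apply: measurableD; [exact: mBT | exact: mGd].
    - apply: measurableC; exact: mGd.
    - by move=> w [].
have pB0 : (0 <= pB)%E by exact: measure_ge0.
have pB1 : (pB <= 1)%E by exact: probability_le1 (mB00 q).
have fin : pB \is a fin_num by rewrite ge0_fin_numE // (le_lt_trans pB1) // ltey.
set pr := fine pB.
have epr : pB = pr%:E by rewrite fineK.
have pr0 : 0 <= pr by rewrite /pr fine_ge0.
suff : pr = 0 by move=> h; rewrite hE epr h.
apply: (pr_zero (d := d)) => //; first by case: (i0) => i /=; lia.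
move=> n.
pose A := [pred k : Kt d n.+1 | inbox n (emb k)].
pose K := #|[pred k : Kt d n.+1 | ~~ inbox n (emb k)]|.
have hs := @sum_le_card R d P (Kt d n.+1) A
  (fun k => transl (emb k) @^-1` B0 i0 q `&` Gd) K
  (fun k => measurableI _ _ (mBT (emb k) q) (mGd)).
have hs' : (pr *+ #|A| <= K%:R)%R.
  rewrite -lee_fin; apply: le_trans _ (hs _).
    rewrite (eq_bigr (fun _ => pr%:E)); last by move=> k _; rewrite hE epr.
    by rewrite sumEFin sumr_const.
  move=> w; case: (pselect (Gd w)) => g.
    apply: leq_trans (count_bound i0 q n (Gd_good g)).
    apply: subset_leq_card; apply/fintype.subsetP => k; rewrite !inE.
    move=> /andP [-> /=]; rewrite in_setE => -[hB _]; exact/asboolP.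
  rewrite (_ : #|_| = 0)%N //; apply: eq_card0 => k; rewrite !inE.
  apply/negbTE/negP => /andP [_]; rewrite in_setE => -[_]; exact: g.
have c1 := card_In n.
have c2 := card_tot n.
rewrite -mulr_natr in hs'.
rewrite -!natrX.
have c3 : (K%:R = ((n.*2.+3) ^ d)%:R - (#|A|)%:R :> R)%R.
  by rewrite -c2 natrD addrC addKr.
rewrite c3 in hs'.
have c4 : (((n.*2.+1) ^ d)%:R <= (#|A|)%:R :> R)%R by rewrite ler_nat.
nra.
Qed.
End Final.


End S6.
Import S6.

Theorem theorem1 (R : realType) (d : nat) (hd : (0 < d)%N)
  (P : probability (Omega R d) R)
  (A1 : forall (z : Zd d) (A : set (Omega R d)),
      measurable A -> P ((@transl R d z) @^-1` A) = P A)
  (A2 : forall e f : Edge d, e <> f ->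
      P [set w : Omega R d | w e = w f] = 0%E) :
  {ae P, forall w : Omega R d, forall x : Zd d, finite_set (Cx w x)}.
Proof.
pose i0 : 'I_d := Ordinal hd.
have nG := negl_Gd A2.
apply: (@negligibleS _ _ _ _ (~` (@Gd R d) `|`
  [set w | exists t : rat * Zd d, (transl t.2 @^-1` B0 i0 (ratr t.1) `&` Gd) w])).
  move=> w /= nf; case: (pselect (Gd w)) => g; last by left.
  right.
  have [x hx] : exists x, ~ finite_set (Cx w x) by apply/existsNP.
  have [r [y [h1 h2]]] := D1 i0 (Gd_good g) hx.
  by exists (r, y); split => //; exact: toB.
apply: negligibleU => //; apply: negl_ex => -[r y].
exists (transl y @^-1` B0 i0 (ratr r) `&` Gd); split => //.
  apply: measurableI; [exact: mBT | exact: mGd].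
exact: B_null.
Qed.
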